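(* If an LJB-sequent $\Gamma\vdash A$ has a derivation in LJB, then it has a non-redundant derivation, i.e. a derivation in which the same LJB-sequent does not occur twice on the same branch.
   Context: LJB: formulas $A ::= P(t_1,\dots,t_n)\mid A\rightarrow A\mid\forall x\,A$ with first-order terms. An LJB-context is a finite multiset of items; an item is a formula or $[\Gamma]_V$ ($V$ a finite set of variables bound by the bracket, $\Gamma$ an LJB-context); $FV([\Gamma]_V)=FV(\Gamma)\setminus V$. An LJB-sequent is $\Gamma\vdash A$ with $\Gamma$ an LJB-context and $A$ a formula. Cleaning rules (anywhere in a context): $[I,\Gamma]_V\longrightarrow I,[\Gamma]_V$ if $FV(I)\cap V=\emptyset$; $[\ ]_V\longrightarrow\emptyset$; $I\,I\longrightarrow I$; $\Gamma{\downarrow}$ is the normal form for a fixed strategy. LJB rules apply only to LJB-sequents with normal context in which, in each formula, bound variables are distinct and distinct from free variables; formulas are not identified modulo $\alpha$. Rules: (L$\rightarrow$) from $\Gamma'\vdash A_1,\dots,\Gamma'\vdash A_n$ infer $\Gamma\vdash P$, where $\Gamma=\Gamma_1,[\Gamma_2,[\dots\Gamma_{i-1},[\Gamma_i, A_1\rightarrow\dots\rightarrow A_n\rightarrow P]_{V_{i-1}}\dots]_{V_2}]_{V_1}$ ($i\ge1$), $\Gamma'=([\dots[[\Gamma_1]_{V_1},\Gamma_2]_{V_2},\dots,\Gamma_{i-1}]_{V_{i-1}},\Gamma_i,A_1\rightarrow\dots\rightarrow A_n\rightarrow P){\downarrow}$, $P$ atomic with no free variable in $V_1\cup\dots\cup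 V_{i-1}$; (R$\forall$) from $[\Gamma]_V{\downarrow}\vdash A$ infer $\Gamma\vdash\forall x\,A$, $V$ the set of all variables bound in $\forall x\,A$; (R$\rightarrow$) from $(\Gamma,A){\downarrow}\vdash B$ infer $\Gamma\vdash A\rightarrow B$. *)

(* Defs.v *)
From Stdlib Require Import List Permutation.
Import ListNotations.

Definition var := nat.

Inductive term : Type :=
| TVar : var -> term
| TFun : nat -> list term -> term.

Inductive form : Type :=
| Atom : nat -> list term -> form
| Imp : form -> form -> form
| All : var -> form -> form.

Fixpoint fv_term (t : term) : list var :=
  match t with
  | TVar x => [x]
  | TFun _ ts => flat_map fv_term ts
  end.

Fixpoint fv_form (A : form) : list var :=
  match A with
  | Atom _ ts => flat_map fv_term ts
  | Imp A B => fv_form A ++ fv_form B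
  | All x A => filter (fun y => negb (Nat.eqb y x)) (fv_form A)
  end.

Fixpoint bv_form (A : form) : list var :=
  match A with
  | Atom _ _ => []
  | Imp A B => bv_form A ++ bv_form B
  | All x A => x :: bv_form A
  end.

Definition wf_form (A : form) : Prop :=
  NoDup (bv_form A) /\ (forall x, In x (bv_form A) -> ~ In x (fv_form A)).

(** Items: a formula, or a bracket [Gamma]_V.  An LJB-context is a finite
    multiset of items, represented by a list taken modulo [ctx_eq]. *)
Inductive item : Type :=
| IF : form -> item
| IB : list var -> list item -> item.

Definition ctx := list item.

Fixpoint fv_item (I : item) : list var :=
  match I with
  | IF A => fv_form A
  | IB V G => filter (fun y => negb (existsb (Nat.eqb y) V)) (flat_map fv_item G)
  end.

Definition fv_ctx (G : ctx) : list var := flat_map fv_item G.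

Fixpoint forms_item (I : item) : list form :=
  match I with
  | IF A => [A]
  | IB V G => flat_map forms_item G
  end.

Definition forms_ctx (G : ctx) : list form := flat_map forms_item G.

(** Equality of items / contexts as (nested) multisets, V as finite sets. *)
Inductive item_eq : item -> item -> Prop :=
| ieq_form : forall A, item_eq (IF A) (IF A)
| ieq_br : forall V V' G G' G'',
    (forall x, In x V <-> In x V') ->
    Permutation G G'' -> Forall2 item_eq G'' G' ->
    item_eq (IB V G) (IB V' G').

Definition ctx_eq (G G' : ctx) : Prop :=
  exists G'', Permutation G G'' /\ Forall2 item_eq G'' G'.

Definition sequent : Type := (ctx * form)%type.

Definition seq_eq (s s' : sequent) : Prop :=
  ctx_eq (fst s) (fst s') /\ snd s = snd s'.

Definition disjoint (l1 l2 : list var) : Prop := forall x, In x l1 -> ~ In x l2.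

Inductive clean_step : ctx -> ctx -> Prop :=
| cs_out : forall G1 G2 V H1 H2 I,
    disjoint (fv_item I) V ->
    clean_step (G1 ++ IB V (H1 ++ I :: H2) :: G2) (G1 ++ I :: IB V (H1 ++ H2) :: G2)
| cs_empty : forall G1 G2 V,
    clean_step (G1 ++ IB V [] :: G2) (G1 ++ G2)
| cs_dup : forall G1 G2 G3 I J,
    item_eq I J ->
    clean_step (G1 ++ I :: G2 ++ J :: G3) (G1 ++ I :: G2 ++ G3)
| cs_in : forall G1 G2 V H H',
    clean_step H H' ->
    clean_step (G1 ++ IB V H :: G2) (G1 ++ IB V H' :: G2).

Inductive clean_star : ctx -> ctx -> Prop :=
| cst_eq : forall G G', ctx_eq G G' -> clean_star G G'
| cst_step : forall G G' G'', clean_step G G' -> clean_star G' G'' -> clean_star G G''.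

Definition normal (G : ctx) : Prop := forall G', ~ clean_step G G'.

(** [nf] is a normalisation function for a fixed strategy: it computes a
    cleaning normal form and is a function of the multiset. *)
Definition is_nf_strategy (nf : ctx -> ctx) : Prop :=
  (forall G, clean_star G (nf G)) /\
  (forall G, normal (nf G)) /\
  (forall G G', ctx_eq G G' -> ctx_eq (nf G) (nf G')).

(** Gamma_1,[Gamma_2,[ ... Gamma_{i-1},[last]_{V_{i-1}} ...]_{V_2}]_{V_1}
    where L = [(Gamma_1,V_1); ...; (Gamma_{i-1},V_{i-1})]. *)
Fixpoint build_conc (L : list (ctx * list var)) (last : ctx) : ctx :=
  match L with
  | [] => last
  | (G, V) :: rest => G ++ [IB V (build_conc rest last)]
  end.

(** [ ... [[Gamma_1]_{V_1}, Gamma_2]_{V_2}, ..., Gamma_{i-1}]_{V_{i-1}}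
    (empty when i = 1). *)
Fixpoint unwind (acc : ctx) (L : list (ctx * list var)) : ctx :=
  match L with
  | [] => acc
  | (G, V) :: rest => unwind [IB V (acc ++ G)] rest
  end.

Inductive ljb_rule (nf : ctx -> ctx) : list sequent -> sequent -> Prop :=
| r_L_imp : forall (L : list (ctx * list var)) (Gi : ctx) (As : list form)
                   (p : nat) (ts : list term),
    (forall V x, In V (map snd L) -> In x V -> ~ In x (fv_form (Atom p ts))) ->
    ljb_rule nf
      (map (fun A => (nf (unwind [] L ++ Gi ++ [IF (fold_right Imp (Atom p ts) As)]), A)) As)
      (build_conc L (Gi ++ [IF (fold_right Imp (Atom p ts) As)]), Atom p ts)
| r_R_all : forall (G : ctx) (x : var) (A : form),
    ljb_rule nf [(nf [IB (bv_form (All x A)) G], A)] (G, All x A)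
| r_R_imp : forall (G : ctx) (A B : form),
    ljb_rule nf [(nf (G ++ [IF A]), B)] (G, Imp A B).

Definition applicable (s : sequent) : Prop :=
  normal (fst s) /\ Forall wf_form (forms_ctx (fst s)) /\ wf_form (snd s).

Definition rule_inst (nf : ctx -> ctx) (prems : list sequent) (concl : sequent) : Prop :=
  applicable concl /\
  exists prems0 concl0,
    ljb_rule nf prems0 concl0 /\ Forall2 seq_eq prems prems0 /\ seq_eq concl concl0.

Inductive tree : Type := Node : sequent -> list tree -> tree.

Definition root (t : tree) : sequent := match t with Node s _ => s end.

Inductive derivation (nf : ctx -> ctx) : tree -> Prop :=
| der_node : forall s ts,
    rule_inst nf (map root ts) s -> Forall (derivation nf) ts ->
    derivation nf (Node s ts).

(** No sequent occurs twice on the same branch; [anc] are the sequents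
    strictly below the current node on its branch. *)
Inductive nonredundant_from : list sequent -> tree -> Prop :=
| nr_node : forall anc s ts,
    (forall s', In s' anc -> ~ seq_eq s' s) ->
    Forall (nonredundant_from (s :: anc)) ts ->
    nonredundant_from anc (Node s ts).

Definition nonredundant (t : tree) : Prop := nonredundant_from [] t.

(* Main.v *)
Require Import Defs.
From Stdlib Require Import List Permutation Classical Lia.
Import ListNotations.

Lemma Forall2_flip {A B} (R : A -> B -> Prop) l1 l2 :
  Forall2 R l1 l2 -> Forall2 (fun y x => R x y) l2 l1.
Proof. induction 1; constructor; auto. Qed.

Lemma Forall2_perm_commute {A} (R : A -> A -> Prop) l1 l2 l3 :
  Forall2 R l1 l2 -> Permutation l2 l3 ->
  exists l4, Permutation l1 l4 /\ Forall2 R l4 l3.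
Proof.
  intros H P. apply Forall2_flip in H.
  destruct (Permutation_Forall2 P H) as [l4 [P4 F4]].
  exists l4; split; auto. apply Forall2_flip in F4. exact F4.
Qed.

Lemma Forall2_compose {A} (R : A -> A -> Prop) a b c :
  Forall2 R a b -> Forall2 R b c ->
  (forall x, In x a -> forall y z, R x y -> R y z -> R x z) -> Forall2 R a c.
Proof.
  intros H; revert c; induction H; intros c H2 T; inversion H2; subst; constructor.
  - eapply T; eauto. left; auto.
  - apply IHForall2; auto. intros; eapply T; eauto. right; auto.
Qed.

Fixpoint isize (i : item) : nat :=
  match i with IF _ => 1 | IB _ G => S (list_sum (map isize G)) end.

Lemma list_sum_in {A} (f : A -> nat) x l : In x l -> f x <= list_sum (map f l).
Proof.
  induction l; simpl; intros []; subst; simpl; try lia. specialize (IHl H); lia.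
Qed.

Lemma item_eq_trans_n : forall n x, isize x <= n -> forall y z,
  item_eq x y -> item_eq y z -> item_eq x z.
Proof.
  induction n; intros x Hs y z H1 H2.
  - destruct x; simpl in Hs; lia.
  - destruct H1 as [A0|V V' G G' Ga HV PG FG].
    + exact H2.
    + inversion H2 as [|V1 V2 G1 G2 Gb HV2 PG2 FG2]; subst.
      destruct (Forall2_perm_commute _ _ _ _ FG PG2) as [Gc [Pc Fc]].
      econstructor.
      * intro x; rewrite HV, HV2; tauto.
      * eapply perm_trans; eauto.
      * eapply Forall2_compose; eauto.
        intros x Hx y' z' A1 A2. eapply IHn; eauto.
        apply (Permutation_in _ (Permutation_sym (perm_trans PG Pc))) in Hx.
        pose proof (list_sum_in isize _ _ Hx). simpl in Hs. lia.
Qed.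

Lemma item_eq_trans x y z : item_eq x y -> item_eq y z -> item_eq x z.
Proof. apply (item_eq_trans_n (isize x) x); auto. Qed.

Lemma ctx_eq_trans a b c : ctx_eq a b -> ctx_eq b c -> ctx_eq a c.
Proof.
  intros [a1 [Pa Fa]] [b1 [Pb Fb]].
  destruct (Forall2_perm_commute _ _ _ _ Fa Pb) as [l4 [P4 F4]].
  exists l4; split. eapply perm_trans; eauto.
  eapply Forall2_compose; eauto. intros; eapply item_eq_trans; eauto.
Qed.

Lemma seq_eq_trans a b c : seq_eq a b -> seq_eq b c -> seq_eq a c.
Proof.
  intros [H1 H2] [H3 H4]; split. eapply ctx_eq_trans; eauto. congruence.
Qed.

Fixpoint tree_ind' (P : tree -> Prop)
  (H : forall s ts, Forall P ts -> P (Node s ts)) (t : tree) : P t :=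
  match t with
  | Node s ts => H s ts ((fix go l := match l return Forall P l with
                           | [] => Forall_nil _
                           | x :: r => Forall_cons _ (tree_ind' P H x) (go r) end) ts)
  end.

Fixpoint tsize (t : tree) : nat :=
  match t with Node _ ts => S (list_sum (map tsize ts)) end.

Fixpoint labels (t : tree) : list sequent :=
  match t with Node s ts => s :: flat_map labels ts end.

Lemma der_inv nf s ts : derivation nf (Node s ts) ->
  rule_inst nf (map root ts) s /\ Forall (derivation nf) ts.
Proof. intro H; inversion H; auto. Qed.

Lemma descendant nf : forall t, derivation nf t -> forall l, In l (labels t) ->
  exists ts', derivation nf (Node l ts') /\ tsize (Node l ts') <= tsize t /\
   incl (labels (Node l ts')) (labels t).
Proof.
  intro t; induction t as [s ts IH] using tree_ind'; intros D l Hl.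
  simpl in Hl; destruct Hl as [<- | Hl].
  - exists ts; split; auto; split; auto. apply incl_refl.
  - apply der_inv in D as [_ D].
    apply in_flat_map in Hl as [c [Hc Hlc]].
    rewrite Forall_forall in IH, D.
    destruct (IH c Hc (D c Hc) l Hlc) as [ts' [D' [S' I']]].
    exists ts'; split; auto; split.
    + pose proof (list_sum_in tsize _ _ Hc); simpl in *; lia.
    + intros x Hx; apply I' in Hx. right. apply in_flat_map; eauto.
Qed.

Lemma relabel nf s l ts : derivation nf (Node l ts) -> seq_eq s l -> applicable s ->
  derivation nf (Node s ts).
Proof.
  intros D E A. apply der_inv in D as [[_ [p0 [c0 [R [F S]]]]] D].
  constructor; auto. split; auto. exists p0, c0; split; auto; split; auto.
  eapply seq_eq_trans; eauto.
Qed.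

Lemma cut nf : forall n t, tsize t <= n -> derivation nf t ->
  exists ts0, derivation nf (Node (root t) ts0) /\ tsize (Node (root t) ts0) <= tsize t /\
   incl (labels (Node (root t) ts0)) (labels t) /\
   forall l, In l (flat_map labels ts0) -> ~ seq_eq (root t) l.
Proof.
  induction n; intros [s ts] Hs D; [simpl in Hs; lia|]. simpl root.
  destruct (classic (exists l, In l (flat_map labels ts) /\ seq_eq s l)) as [[l [Hl E]]|N].
  - pose proof D as D0. apply der_inv in D0 as [[A _] Dc].
    apply in_flat_map in Hl as [c [Hc Hlc]].
    rewrite Forall_forall in Dc.
    destruct (descendant nf c (Dc c Hc) l Hlc) as [ts' [D' [S' I']]].
    pose proof (list_sum_in tsize _ _ Hc).
    assert (D1 : derivation nf (Node s ts')) by (eapply relabel; eauto).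
    destruct (IHn (Node s ts')) as [ts0 [D2 [S2 [I2 N2]]]]; auto.
    { simpl in *; lia. }
    exists ts0; split; auto; split; [simpl in *; lia|]; split; auto.
    intros x Hx. apply I2 in Hx. simpl in Hx. destruct Hx as [<-|Hx]; [left; auto|].
    right. apply in_flat_map. exists c; split; auto. apply I'. right; auto.
  - exists ts; split; auto; split; auto; split; [apply incl_refl|].
    intros l Hl E; apply N; eauto.
Qed.

Lemma collect {A B} (Q : A -> B -> Prop) l :
  Forall (fun a => exists b, Q a b) l -> exists l', Forall2 Q l l'.
Proof.
  induction 1 as [|a r [b Hb] _ [r' Hr]]; [exists []; constructor|].
  exists (b :: r'); constructor; auto.
Qed.

Lemma main nf : forall n t, tsize t <= n -> derivation nf t ->
  forall anc, (forall a l, In a anc -> In l (labels t) -> ~ seq_eq a l) ->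
  exists t', derivation nf t' /\ root t' = root t /\ nonredundant_from anc t' /\
    incl (labels t') (labels t).
Proof.
  induction n; intros t Hs D anc Hanc; [destruct t; simpl in Hs; lia|].
  destruct (cut nf (tsize t) t (le_n _) D) as [ts0 [D0 [S0 [I0 N0]]]].
  destruct t as [s ts]; simpl root in *.
  apply der_inv in D0 as [R0 F0].
  assert (H : Forall (fun c => exists c', derivation nf c' /\ root c' = root c /\
              nonredundant_from (s :: anc) c' /\ incl (labels c') (labels c)) ts0).
  { rewrite Forall_forall in F0 |- *. intros c Hc.
    apply (IHn c); auto.
    - pose proof (list_sum_in tsize _ _ Hc); simpl in *; lia.
    - intros a l [<-|Ha] Hl.
      + apply N0, in_flat_map; eauto.
      + apply Hanc; auto. apply I0. right. apply in_flat_map; eauto. }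
  destruct (collect _ _ H) as [ts1 F1].
  assert (Hr : map root ts1 = map root ts0).
  { clear -F1. induction F1; simpl; auto. destruct H as [_ [-> _]]. congruence. }
  exists (Node s ts1); split; [|split; [reflexivity|split]].
  - constructor. rewrite Hr; auto.
    clear -F1. induction F1; constructor; auto. apply H.
  - constructor.
    + intros a Ha. apply Hanc; auto. left; auto.
    + clear -F1. induction F1; constructor; auto. apply H.
  - intros x [<-|Hx]; [left; auto|].
    apply I0. right. apply in_flat_map in Hx as [c' [Hc' Hx]].
    clear -F1 Hc' Hx. induction F1; [destruct Hc'|].
    destruct Hc' as [<-|Hc'].
    + apply in_flat_map. exists x0; split; [left; auto|]. apply H; auto.
    + specialize (IHF1 Hc'). apply in_flat_map in IHF1 as [c [? ?]].
      apply in_flat_map. exists c; split; [right|]; auto.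
Qed.

Theorem proposition14 :
  forall (nf : ctx -> ctx), is_nf_strategy nf ->
  forall (G : ctx) (A : form),
    (exists t, derivation nf t /\ root t = (G, A)) ->
    exists t, derivation nf t /\ root t = (G, A) /\ nonredundant t.
Proof.
  intros nf _ G A [t [D R]].
  destruct (main nf (tsize t) t (le_n _) D []) as [t' [D' [R' [N' _]]]].
  { intros a l []. }
  exists t'; repeat split; auto; congruence.
Qed.
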